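(* Let $i:A\to X$ be a smooth cofibration of Frölicher spaces. Then $i$ is initial: for every structure function $f\in\mathcal F_A$ there exists $\tilde f\in\mathcal F_X$ with $f=\tilde f\circ i$. Consequently, if $A$ is Hausdorff (i.e. $\mathcal F_A$ separates the points of $A$), then $i$ is injective, and $A$ may be regarded as a Frölicher subspace of $X$.
   Context: A Frölicher space is a triple $(X,\mathcal C_X,\mathcal F_X)$ with $\mathcal C_X\subseteq X^{\mathbb R}$, $\mathcal F_X\subseteq\mathbb R^X$, such that $\mathcal F_X=\{f\mid f\circ c\in C^\infty(\mathbb R,\mathbb R)\ \forall c\in\mathcal C_X\}$ and $\mathcal C_X=\{c\mid f\circ c\in C^\infty(\mathbb R,\mathbb R)\ \forall f\in\mathcal F_X\}$. A map $\varphi:X\to Y$ is smooth if $g\circ\varphi\in\mathcal F_X$ for all $g\in\mathcal F_Y$. Products carry the structure generated by $f\circ\pi_i$. $I$ is $[0,1]$ with the subspace structure from $\mathbb R$. For $0<\epsilon<\frac12$, a braking function $\alpha_\epsilon:\mathbb R\to\mathbb R$ is a smooth function with $\alpha_\epsilon(t)=0$ for $t\le\epsilon$, $0<\alpha_\epsilon(t)<1$ and $\alpha_\epsilon$ strictly increasing on $(\epsilon,1-\epsilon)$, and $\alpha_\epsilon(t)=1$ for $t\ge1-\epsilon$. A smooth map $i:A\to X$ is a smooth cofibration if for every Frölicher space $Z$, every smooth $f:X\to Z$ and every smooth $G:I\times A\to Z$ with $G(0,a)=f(i(a))$ for all $a\in A$, there exist $0<\epsilon<\frac12$, a braking function $\alpha_\epsilon$,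 and a smooth $F:I\times X\to Z$ with $F(0,x)=f(x)$ for all $x\in X$ and $F(t,i(a))=G(\alpha_\epsilon(t),a)$ for all $t\in I$, $a\in A$. *)

(* Defs.v *)
From Stdlib Require Import Reals Lra.
Open Scope R_scope.

Definition smoothR (f : R -> R) : Prop :=
  exists d : nat -> R -> R,
    (forall x, d O x = f x) /\
    (forall n x, derivable_pt_lim (d n) x (d (S n) x)).

Record Frol := {
  carrier :> Type;
  curves : (R -> carrier) -> Prop;
  funs : (carrier -> R) -> Prop;
  funs_spec : forall f, funs f <-> (forall c, curves c -> smoothR (fun t => f (c t)));
  curves_spec : forall c, curves c <-> (forall f, funs f -> smoothR (fun t => f (c t)))
}.

Definition gen_curves {T : Type} (F0 : (T -> R) -> Prop) (c : R -> T) : Prop :=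
  forall f, F0 f -> smoothR (fun t => f (c t)).
Definition gen_funs {T : Type} (F0 : (T -> R) -> Prop) (f : T -> R) : Prop :=
  forall c, gen_curves F0 c -> smoothR (fun t => f (c t)).

Lemma gen_funs_spec {T : Type} (F0 : (T -> R) -> Prop) :
  forall f, gen_funs F0 f <-> (forall c, gen_curves F0 c -> smoothR (fun t => f (c t))).
Proof. intros f; split; auto. Qed.

Lemma gen_curves_spec {T : Type} (F0 : (T -> R) -> Prop) :
  forall c, gen_curves F0 c <-> (forall f, gen_funs F0 f -> smoothR (fun t => f (c t))).
Proof.
  intros c; split.
  - intros Hc f Hf; apply Hf, Hc.
  - intros H f Hf; apply H; intros c' Hc'; apply Hc', Hf.
Qed.

Definition Frol_gen (T : Type) (F0 : (T -> R) -> Prop) : Frol :=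
  {| carrier := T; curves := gen_curves F0; funs := gen_funs F0;
     funs_spec := gen_funs_spec F0; curves_spec := gen_curves_spec F0 |}.

Definition smooth_map {X Y : Frol} (phi : X -> Y) : Prop :=
  forall g, funs Y g -> funs X (fun x => g (phi x)).

Definition Rfrol : Frol := Frol_gen R smoothR.

Definition Icar : Type := { t : R | 0 <= t <= 1 }.
Definition Ifrol : Frol :=
  Frol_gen Icar (fun g => exists f, funs Rfrol f /\ g = (fun t : Icar => f (proj1_sig t))).

Definition prod_frol (X Y : Frol) : Frol :=
  Frol_gen (carrier X * carrier Y)
    (fun h => (exists f, funs X f /\ h = (fun p => f (fst p))) \/
              (exists g, funs Y g /\ h = (fun p => g (snd p)))).

Lemma I0_proof : 0 <= 0 <= 1. Proof. lra. Qed.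
Definition I0 : Ifrol := exist (fun t => 0 <= t <= 1) 0 I0_proof.

(** clamping R into [0,1]; used to view the values of a braking function in I *)
Lemma clamp_proof (r : R) : 0 <= Rmax 0 (Rmin 1 r) <= 1.
Proof.
  unfold Rmax, Rmin; destruct (Rle_dec 1 r), (Rle_dec 0 _); lra.
Qed.
Definition Iclamp (r : R) : Ifrol := exist (fun t => 0 <= t <= 1) (Rmax 0 (Rmin 1 r)) (clamp_proof r).

Definition braking (eps : R) (alpha : R -> R) : Prop :=
  smoothR alpha /\
  (forall t, t <= eps -> alpha t = 0) /\
  (forall t, eps < t < 1 - eps -> 0 < alpha t < 1) /\
  (forall s t, eps < s -> s < t -> t < 1 - eps -> alpha s < alpha t) /\
  (forall t, 1 - eps <= t -> alpha t = 1).

Definition smooth_cofibration {A X : Frol} (i : A -> X) : Prop :=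
  smooth_map i /\
  forall (Z : Frol) (f : X -> Z) (G : prod_frol Ifrol A -> Z),
    smooth_map f -> smooth_map G ->
    (forall a : A, G (I0, a) = f (i a)) ->
    exists (eps : R) (alpha : R -> R) (F : prod_frol Ifrol X -> Z),
      0 < eps < 1/2 /\ braking eps alpha /\ smooth_map F /\
      (forall x : X, F (I0, x) = f x) /\
      (forall (t : Ifrol) (a : A), F (t, i a) = G (Iclamp (alpha (proj1_sig t)), a)).

Definition frol_hausdorff (A : Frol) : Prop :=
  forall a b : A, a <> b -> exists f, funs A f /\ f a <> f b.

(* Main.v *)
Require Import Defs.
From Stdlib Require Import Reals Lra List Classical.
Open Scope R_scope.

Section Prod.
Variables du dv : nat -> R -> R.
Hypothesis Hu : forall n x, derivable_pt_lim (du n) x (du (S n) x).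
Hypothesis Hv : forall n x, derivable_pt_lim (dv n) x (dv (S n) x).

Fixpoint ev (L : list (R * nat * nat)) (x : R) : R :=
  match L with
  | nil => 0
  | (c, k, j) :: L' => c * du k x * dv j x + ev L' x
  end.

Fixpoint dl (L : list (R * nat * nat)) : list (R * nat * nat) :=
  match L with
  | nil => nil
  | (c, k, j) :: L' => (c, S k, j) :: (c, k, S j) :: dl L'
  end.

Lemma ev_der : forall L x, derivable_pt_lim (ev L) x (ev (dl L) x).
Proof.
  induction L as [|[[c k] j] L IH]; intros x; simpl.
  - apply derivable_pt_lim_const.
  - replace (c * du (S k) x * dv j x + (c * du k x * dv (S j) x + ev (dl L) x))
      with ((c * du (S k) x * dv j x + c * du k x * dv (S j) x) + ev (dl L) x) by ring.
    apply (derivable_pt_lim_plus (fun y => c * du k y * dv j y) (ev L)); [|apply IH].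
    replace (c * du (S k) x * dv j x + c * du k x * dv (S j) x)
      with ((0 * du k x + c * du (S k) x) * dv j x + (c * du k x) * dv (S j) x) by ring.
    apply (derivable_pt_lim_mult (fun y => c * du k y) (dv j)); [|apply Hv].
    apply (derivable_pt_lim_mult (fun _ => c) (du k)); [apply derivable_pt_lim_const|apply Hu].
Qed.
End Prod.

Lemma smoothR_mult (u v : R -> R) : smoothR u -> smoothR v -> smoothR (fun x => u x * v x).
Proof.
  intros [du [Hu0 Hu]] [dv [Hv0 Hv]].
  exists (fun n => ev du dv (Nat.iter n (dl) ((1, 0%nat, 0%nat) :: nil))).
  split.
  - intros x; simpl; rewrite Hu0, Hv0; ring.
  - intros n x. simpl. apply ev_der; assumption.
Qed.

Lemma smoothR_id : smoothR (fun x => x).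
Proof.
  exists (fun n x => match n with O => x | 1%nat => 1 | _ => 0 end).
  split; [reflexivity|].
  intros [|[|n]] x; simpl.
  - apply derivable_pt_lim_id.
  - apply derivable_pt_lim_const.
  - apply derivable_pt_lim_const.
Qed.

Lemma smoothR_const (c : R) : smoothR (fun _ => c).
Proof.
  exists (fun n x => match n with O => c | _ => 0 end).
  split; [reflexivity|].
  intros [|n] x; simpl; apply derivable_pt_lim_const.
Qed.

Lemma smooth_into_gen (D : Frol) (T : Type) (F0 : (T -> R) -> Prop) (G : D -> T) :
  (forall g, F0 g -> funs D (fun x => g (G x))) ->
  @smooth_map D (Frol_gen T F0) G.
Proof.
  intros H g Hg. apply funs_spec. intros c Hc.
  apply Hg. intros h Hh. specialize (H h Hh).
  apply (proj1 (funs_spec D _) H c Hc).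
Qed.

Lemma I1_proof : 0 <= 1 <= 1. Proof. lra. Qed.
Definition I1 : Ifrol := exist (fun t => 0 <= t <= 1) 1 I1_proof.

Theorem mainTheorem6 (A X : Frol) (i : A -> X) :
  smooth_cofibration i ->
  (forall f, funs A f -> exists ft, funs X ft /\ forall a : A, f a = ft (i a)) /\
  (frol_hausdorff A -> forall a b : A, i a = i b -> a = b).
Proof.
  intros [Hi Hcof].
  assert (Hext : forall f, funs A f -> exists ft, funs X ft /\ forall a : A, f a = ft (i a)).
  { intros f Hf.
    set (Z := Frol_gen R (fun g => g = (fun z => z))).
    set (G := fun p : prod_frol Ifrol A => (proj1_sig (fst p) * f (snd p) : Z)).
    set (f0 := fun _ : X => (0 : Z)).
    destruct (Hcof Z f0 G) as [eps [alpha [F [Heps [Hbr [HF [HF0 HFi]]]]]]].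
    - intros g Hg. apply funs_spec. intros c _. unfold f0. apply smoothR_const.
    - apply smooth_into_gen. intros g -> . simpl.
      intros c Hc. apply smoothR_mult.
      + apply (Hc (fun p => proj1_sig (fst p))). left.
        exists (@proj1_sig R _). split; [|reflexivity].
        intros c' Hc'. apply (Hc' (@proj1_sig R _)). exists (fun t => t).
        split; [|reflexivity]. intros c2 Hc2. apply (Hc2 (fun t => t)), smoothR_id.
      + apply (Hc (fun p => f (snd p))). right. exists f. split; [exact Hf|reflexivity].
    - intros a. unfold G, f0; simpl. ring.
    - exists (fun x => (F (I1, x) : R)). split.
      + apply funs_spec. intros c Hc.
        assert (HFf : funs (prod_frol Ifrol X) (fun p => (F p : R))).
        { apply (HF (fun z : R => z)). simpl. intros c' Hc'. apply (Hc' (fun z => z)). reflexivity. }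
        apply (proj1 (funs_spec _ _) HFf (fun s => (I1, c s))).
        simpl. intros h [[k [Hk ->]]|[k [Hk ->]]]; simpl.
        * apply smoothR_const.
        * apply (proj1 (curves_spec X c) Hc k Hk).
      + intros a. rewrite (HFi I1 a). unfold G; simpl.
        destruct Hbr as [_ [_ [_ [_ H1]]]]. rewrite H1 by lra.
        unfold Rmin, Rmax. destruct (Rle_dec 1 1); [|lra]. destruct (Rle_dec 0 1); [|lra]. ring. }
  split; [exact Hext|].
  intros Hh a b Hab. destruct (classic (a = b)) as [|Hne]; [assumption|].
  destruct (Hh a b Hne) as [f [Hf Hfab]].
  destruct (Hext f Hf) as [ft [_ Hft]]. exfalso. apply Hfab.
  rewrite !Hft, Hab. reflexivity.
Qed.
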